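(* The principal eigenvalue function $p\mapsto\mu_1(p)$, $[2,+\infty)\to\mathbb{R}$, is continuous.
   Context: For $p\ge2$, let $W_c^{1,p}(0,1)=\{v\in W^{1,p}(0,1):v'(0)=v(1)=0\}$, $\eta_1(p)=\inf\left\{\frac{\int_0^1|v'|^p dr}{(p-1)\int_0^1 r^{p-2}|v|^p dr}: v\in W_c^{1,p}(0,1),v\not\equiv0\right\}$ and $\mu_1(p)=\eta_1(p)^{1/(p-1)}$; $\mu_1(p)$ is the principal eigenvalue of $-\left(|v'|^{p-2}v'\right)'=\mu^{p-1}(p-1)r^{p-2}|v|^{p-2}v$ in $(0,1)$, $v'(0)=v(1)=0$. *)

(* Defs.v *)
From Stdlib Require Import Reals Lra ClassicalEpsilon.
Open Scope R_scope.

(* x ^ a for x >= 0 and real a >= 0, with the convention 0 ^ 0 = 1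
   and 0 ^ a = 0 for a > 0. *)
Definition pw (x a : R) : R :=
  if Rlt_dec 0 x then Rpower x a
  else if Req_EM_T a 0 then 1 else 0.

Definition Rint (f : R -> R) (a b I : R) : Prop :=
  exists pr : Riemann_integrable f a b, RiemannInt pr = I.

Definition admissible (v dv : R -> R) : Prop :=
  (forall r, 0 <= r <= 1 -> derivable_pt_lim v r (dv r)) /\
  (forall r, 0 <= r <= 1 -> continuity_pt dv r) /\
  dv 0 = 0 /\ v 1 = 0 /\
  ~ (forall r, 0 <= r <= 1 -> v r = 0).

Definition Rayleigh (p x : R) : Prop :=
  exists v dv A B,
    admissible v dv /\
    Rint (fun r => pw (Rabs (dv r)) p) 0 1 A /\
    Rint (fun r => pw r (p - 2) * pw (Rabs (v r)) p) 0 1 B /\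
    x = A / ((p - 1) * B).

Definition is_lower_bound (E : R -> Prop) (m : R) : Prop :=
  forall x, E x -> m <= x.

Definition is_glb (E : R -> Prop) (m : R) : Prop :=
  is_lower_bound E m /\ (forall b, is_lower_bound E b -> b <= m).

Definition eta1 (p : R) : R :=
  epsilon (inhabits 0) (fun m => is_glb (Rayleigh p) m).

Definition mu1 (p : R) : R := Rpower (eta1 p) (1 / (p - 1)).

(* Main.v *)
Require Import Defs.
From Stdlib Require Import Reals.
From Stdlib Require Import Lra ClassicalEpsilon.
From Coquelicot Require Import Coquelicot.
Open Scope R_scope.

Lemma pw_pos_eq x a : 0 < x -> pw x a = Rpower x a.
Proof. intro H; unfold pw; destruct (Rlt_dec 0 x); [reflexivity|lra]. Qed.

Lemma pw_nonpos x a : a <> 0 -> x <= 0 -> pw x a = 0.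
Proof. intros Ha Hx; unfold pw; destruct (Rlt_dec 0 x); [lra|].
destruct (Req_EM_T a 0); [lra|reflexivity]. Qed.

Lemma pw_a0 x : pw x 0 = 1.
Proof. unfold pw; destruct (Rlt_dec 0 x). apply Rpower_O; auto.
destruct (Req_EM_T 0 0); [reflexivity|lra]. Qed.

Lemma Rpower_gt0 x a : 0 < Rpower x a.
Proof. unfold Rpower; apply exp_pos. Qed.

Lemma pw_ge0 x a : 0 <= pw x a.
Proof. unfold pw; destruct (Rlt_dec 0 x). left; apply Rpower_gt0.
destruct (Req_EM_T a 0); lra. Qed.

Lemma pw_gt0 x a : 0 < x -> 0 < pw x a.
Proof. intro; rewrite pw_pos_eq; auto; apply Rpower_gt0. Qed.

Lemma pw_mul x y a : 0 <= x -> 0 <= y -> pw (x*y) a = pw x a * pw y a.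
Proof.
intros Hx Hy. destruct (Req_dec a 0) as [->|Ha].
{ rewrite !pw_a0; ring. }
destruct Hx as [Hx|<-]; [|rewrite Rmult_0_l, (pw_nonpos 0 a); auto; lra].
destruct Hy as [Hy|<-]; [|rewrite Rmult_0_r, (pw_nonpos 0 a); auto; lra].
rewrite !pw_pos_eq; try nra. rewrite Rpower_mult_distr; auto.
Qed.

Lemma pw_1 x : 0 <= x -> pw x 1 = x.
Proof. intros [H|<-]. rewrite pw_pos_eq; auto; apply Rpower_1; auto.
apply pw_nonpos; lra. Qed.

Lemma pw_one a : pw 1 a = 1.
Proof. rewrite pw_pos_eq by lra. unfold Rpower. rewrite ln_1, Rmult_0_r, exp_0; auto. Qed.

Lemma Rpower_le_base x y a : 0 <= a -> 0 < x <= y -> Rpower x a <= Rpower y a.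
Proof. intros; apply Rle_Rpower_l; auto. Qed.

Lemma pw_le_base x y a : 0 <= a -> 0 <= x <= y -> pw x a <= pw y a.
Proof.
intros Ha [Hx Hxy]. destruct (Req_dec a 0) as [->|Ha0]. rewrite !pw_a0; lra.
destruct Hx as [Hx|<-].
rewrite !pw_pos_eq by lra. apply Rle_Rpower_l; lra.
rewrite (pw_nonpos 0 a) by lra. apply pw_ge0.
Qed.

Lemma exp_le x y : x <= y -> exp x <= exp y.
Proof. intros [H|<-]; [left; apply exp_increasing; auto|lra]. Qed.

Lemma Rpower_exp_dec x a b : 0 < x <= 1 -> a <= b -> Rpower x b <= Rpower x a.
Proof.
intros Hx Hab. unfold Rpower. apply exp_le.
assert (ln x <= 0). { rewrite <- ln_1. apply ln_le; lra. } nra.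
Qed.

Lemma pw_exp_dec x a b : 0 <= x <= 1 -> 0 <= a <= b -> pw x b <= pw x a.
Proof.
intros [Hx Hx1] Hab. destruct Hx as [Hx|<-].
rewrite !pw_pos_eq by lra. apply Rpower_exp_dec; lra.
destruct (Req_dec b 0). assert (a = 0) by lra. subst. lra.
rewrite (pw_nonpos 0 b) by lra. apply pw_ge0.
Qed.

Lemma pw_le1 x a : 0 <= x <= 1 -> 0 <= a -> pw x a <= 1.
Proof. intros. rewrite <- (pw_a0 x). apply pw_exp_dec; lra. Qed.

Lemma Rpower_exp_inc x a b : 1 <= x -> a <= b -> Rpower x a <= Rpower x b.
Proof. intros; apply Rle_Rpower; auto. Qed.

Lemma pw_plus x a b : 0 <= x -> 0 <= a -> 0 <= b -> pw x (a+b) = pw x a * pw x b.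
Proof.
intros [Hx|<-] Ha Hb. rewrite !pw_pos_eq by lra; apply Rpower_plus.
destruct (Req_dec a 0) as [->|Ha0]. rewrite pw_a0, Rplus_0_l; ring.
rewrite !(pw_nonpos 0 a) by lra. rewrite pw_nonpos by lra. ring.
Qed.

Lemma Rpower_inv_cancel t e : 0 < t -> Rpower t (-e) * Rpower t e = 1.
Proof. intros; rewrite <- Rpower_plus. replace (-e+e) with 0 by ring. apply Rpower_O; auto. Qed.

Lemma young_big th z p : 0 < th -> th <= z -> 1 <= p -> z <= Rpower th (1-p) * pw z p.
Proof.
intros Hth Hz Hp. rewrite pw_pos_eq by lra.
replace p with (1 + (p-1)) at 2 by ring. rewrite Rpower_plus, Rpower_1 by lra.
assert (Rpower th (p-1) <= Rpower z (p-1)) by (apply Rle_Rpower_l; lra).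
replace (1-p) with (-(p-1)) by ring.
pose proof (Rpower_inv_cancel th (p-1) Hth).
pose proof (Rpower_gt0 th (-(p-1))).
assert (Rpower th (-(p-1)) * (z * Rpower th (p-1)) <= Rpower th (- (p - 1)) * (z * Rpower z (p - 1))).
{ apply Rmult_le_compat_l; [lra|]. apply Rmult_le_compat_l; lra. }
nra.
Qed.

Lemma young th z p : 0 < th -> 0 <= z -> 1 <= p -> z <= th + Rpower th (1-p) * pw z p.
Proof.
intros. destruct (Rle_dec z th). pose proof (Rpower_gt0 th (1-p)); pose proof (pw_ge0 z p); nra.
pose proof (young_big th z p); lra.
Qed.

Lemma cont_of_pt f x : continuity_pt f x -> continuous f x.
Proof. intro H; apply continuity_pt_filterlim; auto. Qed.

Lemma pt_of_cont f x : continuous f x -> continuity_pt f x.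
Proof. intro H; apply continuity_pt_filterlim; auto. Qed.

Lemma lip_cont f x : (forall y z, Rabs (f y - f z) <= Rabs (y - z)) -> continuous f x.
Proof.
intro H. apply cont_of_pt. intros eps Heps. exists eps; split; auto.
intros y [_ Hy]. unfold R_dist in *. eapply Rle_lt_trans; [apply H|auto].
Qed.

Definition box lo hi y := Rmax lo (Rmin hi y).

Lemma box_lip lo hi y z : Rabs (box lo hi y - box lo hi z) <= Rabs (y - z).
Proof.
unfold box, Rmax, Rmin.
repeat (destruct Rle_dec); unfold Rabs; repeat destruct Rcase_abs; lra.
Qed.

Lemma box_cont lo hi x : continuous (box lo hi) x.
Proof. apply lip_cont; intros; apply box_lip. Qed.

Lemma box_in lo hi y : lo <= y <= hi -> box lo hi y = y.
Proof. intros; unfold box, Rmax, Rmin; repeat destruct Rle_dec; lra. Qed.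

Lemma box_range lo hi y : lo <= hi -> lo <= box lo hi y <= hi.
Proof. intros; unfold box, Rmax, Rmin; repeat destruct Rle_dec; lra. Qed.

Lemma pw_cont a x : 0 <= a -> continuous (fun y => pw y a) x.
Proof.
intro Ha. destruct (Req_dec a 0) as [->|Ha0].
{ apply continuous_ext with (fun _ => 1). intro; rewrite pw_a0; auto. apply continuous_const. }
destruct (Rtotal_order x 0) as [Hx|[Hx|Hx]].
- apply continuous_ext_loc with (fun _ => 0).
  exists (mkposreal (-x) ltac:(lra)). intros y Hy.
  assert (Rabs (y - x) < -x) by apply Hy.
  rewrite pw_nonpos; auto. unfold Rabs in *; destruct Rcase_abs; lra.
  apply continuous_const.
- subst x. apply cont_of_pt. intros eps Heps.
  exists (Rpower eps (1/a)); split. apply Rpower_gt0.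
  intros y [_ Hy]. change (Rabs (y - 0) < Rpower eps (1/a)) in Hy.
  change (Rabs (pw y a - pw 0 a) < eps). rewrite Rminus_0_r in Hy.
  rewrite (pw_nonpos 0 a) by lra. rewrite Rminus_0_r.
  destruct (Rle_dec y 0). rewrite pw_nonpos; auto. rewrite Rabs_R0; auto.
  rewrite pw_pos_eq by lra. rewrite Rabs_pos_eq by (left; apply Rpower_gt0).
  replace eps with (Rpower (Rpower eps (1/a)) a).
  apply Rlt_Rpower_l; try lra. split; try lra. rewrite Rabs_pos_eq in Hy; lra.
  rewrite Rpower_mult. replace (1/a*a) with 1 by (field; auto). apply Rpower_1; auto.
- apply continuous_ext_loc with (fun y => Rpower y a).
  exists (mkposreal x Hx). intros y Hy.
  assert (Rabs (y - x) < x) by apply Hy.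
  rewrite pw_pos_eq; auto. unfold Rabs in *; destruct Rcase_abs; lra.
  apply cont_of_pt. apply derivable_continuous_pt. exists (a * Rpower x (a-1)).
  apply derivable_pt_lim_power; auto.
Qed.

Lemma pw_abs_cont a (f : R -> R) (x : R) : 0 <= a -> continuous f x -> continuous (fun y => pw (Rabs (f y)) a) x.
Proof.
intros Ha Hf. apply continuous_comp with (g := fun z => pw z a).
apply continuous_comp with (g := Rabs); auto. apply continuous_Rabs.
apply pw_cont; auto.
Qed.

Lemma cont_mult (f g : R -> R) (x : R) : continuous f x -> continuous g x -> continuous (fun y => f y * g y) x.
Proof. intros; apply (continuous_mult f g); auto. Qed.

Lemma Rint_RInt f a b I : Rint f a b I -> ex_RInt f a b /\ RInt f a b = I.
Proof. intros [pr <-]. split. apply (ex_RInt_Reals_1 _ _ _ pr). apply RInt_Reals. Qed.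

Lemma RInt_Rint f a b : ex_RInt f a b -> Rint f a b (RInt f a b).
Proof. intro H. exists (ex_RInt_Reals_0 _ _ _ H). symmetry; apply RInt_Reals. Qed.

Lemma exI (f : R -> R) a b : a <= b -> (forall t, a <= t <= b -> continuous f t) -> ex_RInt f a b.
Proof. intros Hab H. apply (ex_RInt_continuous (V := R_CompleteNormedModule)). intros z Hz.
rewrite Rmin_left, Rmax_right in Hz by lra. auto. Qed.

Lemma RInt_mulc (f : R -> R) a b K : ex_RInt f a b -> RInt (fun t => K * f t) a b = K * RInt f a b.
Proof. intro H. exact (RInt_scal (V:=R_CompleteNormedModule) f a b K H). Qed.
Lemma ex_mulc (f : R -> R) a b K : ex_RInt f a b -> ex_RInt (fun t => K * f t) a b.
Proof. intro H. exact (ex_RInt_scal (V:=R_CompleteNormedModule) f a b K H). Qed.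
Lemma RInt_cst a b c : RInt (fun _ => c) a b = c * (b - a).
Proof. rewrite (RInt_const (V:=R_CompleteNormedModule)). unfold scal; simpl; unfold mult; simpl. ring. Qed.
Lemma RInt_add (f g : R -> R) a b : ex_RInt f a b -> ex_RInt g a b -> RInt (fun t => f t + g t) a b = RInt f a b + RInt g a b.
Proof. intros. exact (RInt_plus (V:=R_CompleteNormedModule) f g a b H H0). Qed.
Lemma ex_add (f g : R -> R) a b : ex_RInt f a b -> ex_RInt g a b -> ex_RInt (fun t => f t + g t) a b.
Proof. intros. exact (ex_RInt_plus (V:=R_CompleteNormedModule) f g a b H H0). Qed.
Lemma RInt_affine (f : R -> R) a b c K : ex_RInt f a b ->
  RInt (fun t => c + K * f t) a b = c * (b - a) + K * RInt f a b.
Proof.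
intro H. rewrite RInt_add. rewrite RInt_cst, RInt_mulc; auto. apply ex_RInt_const. apply ex_mulc; auto.
Qed.

Lemma int_sub (f : R -> R) r : 0 <= r <= 1 -> ex_RInt f 0 1 -> (forall t, 0 < t < 1 -> 0 <= f t) ->
  RInt f r 1 <= RInt f 0 1.
Proof.
intros Hr Hf Hpos. rewrite <- (RInt_Chasles f 0 r 1).
2: apply (ex_RInt_Chasles_1 f 0 r 1); auto; lra.
2: apply (ex_RInt_Chasles_2 f 0 r 1); auto; lra.
assert (0 <= RInt f 0 r). apply RInt_ge_0; try lra. apply (ex_RInt_Chasles_1 f 0 r 1); auto; lra.
intros; apply Hpos; lra.
change (plus (RInt f 0 r) (RInt f r 1)) with (RInt f 0 r + RInt f r 1). lra.
Qed.

Lemma adm_v_cont v dv r : admissible v dv -> 0 <= r <= 1 -> continuous v r.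
Proof. intros [H _] Hr. apply cont_of_pt. apply derivable_continuous_pt.
exists (dv r). apply H; auto. Qed.

Lemma adm_dv_cont v dv r : admissible v dv -> 0 <= r <= 1 -> continuous dv r.
Proof. intros [_ [H _]] Hr. apply cont_of_pt; auto. Qed.

Lemma adm_ftc v dv r : admissible v dv -> 0 <= r <= 1 -> v r = - RInt dv r 1.
Proof.
intros Ha Hr. pose proof Ha as [Hd [Hc [H0 [H1 _]]]].
assert (is_RInt dv r 1 (minus (v 1) (v r))).
{ apply (is_RInt_derive (V:=R_CompleteNormedModule)); rewrite Rmin_left, Rmax_right by lra; intros x Hx.
  apply is_derive_Reals; apply Hd; lra. apply adm_dv_cont with v; auto; lra. }
apply (is_RInt_unique (V:=R_CompleteNormedModule)) in H. rewrite H, H1. unfold minus, plus, opp; simpl. ring.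
Qed.

Lemma adm_dv_ex v dv a b : admissible v dv -> 0 <= a <= b -> b <= 1 -> ex_RInt dv a b.
Proof. intros. apply exI; try lra. intros; apply adm_dv_cont with v; auto; lra. Qed.

Lemma adm_bound v dv c (h : R -> R) r : admissible v dv -> 0 <= r <= 1 ->
  ex_RInt h 0 1 -> (forall t, 0 <= t <= 1 -> continuous h t) ->
  (forall t, 0 < t < 1 -> Rabs (c * dv t) <= h t) ->
  Rabs (c * v r) <= RInt h 0 1.
Proof.
intros Ha Hr Hh Hhc Hle. rewrite (adm_ftc v dv r Ha Hr).
assert (ex_RInt dv r 1) by (apply adm_dv_ex with v; auto; lra).
rewrite <- Ropp_mult_distr_r, Rabs_Ropp. rewrite <- RInt_mulc by auto.
eapply Rle_trans. apply abs_RInt_le. lra. apply ex_mulc; auto.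
eapply Rle_trans. apply RInt_le. lra.
apply (ex_RInt_norm (fun t => c * dv t)). apply ex_mulc; auto.
apply exI; try lra. intros; apply Hhc; lra.
intros; apply Hle; lra.
apply int_sub; auto. intros t Ht. eapply Rle_trans; [apply Rabs_pos|apply Hle; auto].
Qed.

Lemma Rpower_neg_inv z e : 0 < z -> Rpower z (-e) = Rpower (/z) e.
Proof. intro; unfold Rpower; rewrite ln_Rinv; auto; f_equal; ring. Qed.

Lemma Rpower_two th : 0 < th -> Rpower th 2 = th * th.
Proof. intro; replace 2 with (1+1) by ring; rewrite Rpower_plus, Rpower_1; auto. Qed.

Lemma pw_small th z q : 0 < th <= 1 -> 0 <= z <= th -> 2 <= q -> pw z q <= th * th.
Proof.
intros Ht Hz Hq. eapply Rle_trans. apply pw_le_base with (y := th); lra.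
eapply Rle_trans. apply pw_exp_dec with (a := 2); lra.
rewrite pw_pos_eq, Rpower_two; lra.
Qed.

Lemma Rpower_le1 z e : 0 < z <= 1 -> 0 <= e -> Rpower z e <= 1.
Proof. intros. rewrite <- (pw_pos_eq z e) by lra. apply pw_le1; lra. Qed.

Lemma trunc_err M p y : 0 < M -> 1 <= p ->
  Rabs (y - box (-M) M y) <= Rpower M (1-p) * pw (Rabs y) p.
Proof.
intros HM Hp. destruct (Rle_dec (Rabs y) M).
- rewrite box_in. rewrite Rminus_diag, Rabs_R0.
  pose proof (Rpower_gt0 M (1-p)); pose proof (pw_ge0 (Rabs y) p); nra.
  unfold Rabs in r; destruct Rcase_abs; lra.
- eapply Rle_trans; [|apply young_big; lra].
  unfold box, Rmax, Rmin in *; repeat destruct Rle_dec; unfold Rabs in *;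
  repeat destruct Rcase_abs; lra.
Qed.

Lemma trunc_abs M y : 0 <= M -> Rabs (box (-M) M y) <= Rabs y /\ Rabs (box (-M) M y) <= M.
Proof. intros. unfold box, Rmax, Rmin; repeat destruct Rle_dec; unfold Rabs; repeat destruct Rcase_abs; lra. Qed.

Lemma pow_ratio z M th e : 0 < th <= 1 -> 1 <= M -> th <= z <= M ->
  Rpower z e <= Rpower (M/th) (Rabs e).
Proof.
intros Ht HM Hz. assert (M <= M/th). { unfold Rdiv.
 assert (1 <= /th). { rewrite <- Rinv_1. apply Rinv_le_contravar; lra. } nra. }
destruct (Rle_dec 0 e).
- rewrite Rabs_pos_eq by auto. apply Rle_Rpower_l; auto. lra.
- rewrite Rabs_left by lra. replace e with (-(-e)) at 1 by ring.
  rewrite Rpower_neg_inv by lra. apply Rle_Rpower_l. lra. split.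
  apply Rinv_0_lt_compat; lra.
  apply Rle_trans with (/th). apply Rinv_le_contravar; lra. unfold Rdiv.
  assert (0 < /th) by (apply Rinv_0_lt_compat; lra). nra.
Qed.

Lemma num_pt th M p q y : 0 < th <= 1 -> 1 <= M -> 2 <= p -> 2 <= q ->
  pw (Rabs (box (-M) M y)) q <= th * th + Rpower (M/th) (Rabs (q-p)) * pw (Rabs y) p.
Proof.
intros Ht HM Hp Hq. destruct (trunc_abs M y) as [H1 H2]; try lra.
set (z := Rabs (box (-M) M y)) in *.
assert (0 <= z) by apply Rabs_pos.
pose proof (Rpower_gt0 (M/th) (Rabs (q-p))). pose proof (pw_ge0 (Rabs y) p).
destruct (Rle_dec z th).
- pose proof (pw_small th z q). nra.
- rewrite pw_pos_eq by lra.
  assert (Rpower z q = Rpower z p * Rpower z (q-p)) as ->.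
  { rewrite <- Rpower_plus. f_equal; ring. }
  assert (Rpower z p <= pw (Rabs y) p). { rewrite <- pw_pos_eq by lra. apply pw_le_base; lra. }
  assert (Rpower z (q-p) <= Rpower (M/th) (Rabs (q-p))) by (apply pow_ratio; lra).
  pose proof (Rpower_gt0 z p). pose proof (Rpower_gt0 z (q-p)).
  assert (Rpower z p * Rpower z (q-p) <= pw (Rabs y) p * Rpower (M/th) (Rabs (q-p))).
  { apply Rmult_le_compat; lra. }
  nra.
Qed.

Lemma den_pt th eta rho P p q t x y : 0 < eta < th -> th <= 1 -> 0 < rho <= 1 ->
  2 <= p <= P -> 2 <= q <= P -> rho <= t <= 1 -> 0 <= x <= 2 -> 0 <= y ->
  Rabs (x - y) <= eta ->
  pw t (p-2) * pw x p - (th*th + Rpower 2 P * (1 - Rpower (1 - eta/th) P * Rpower (rho*th/2) (Rabs (q-p))))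
  <= pw t (q-2) * pw y q.
Proof.
intros He Ht Hr Hp Hq Htr Hx Hy Hxy.
set (lam := 1 - eta/th).
assert (Hlam : 0 < lam <= 1). { unfold lam. split. 
  assert (eta/th < 1). { apply Rmult_lt_reg_r with th; try lra. unfold Rdiv; rewrite Rmult_assoc, Rinv_l; lra. } lra.
  assert (0 < eta/th) by (apply Rdiv_lt_0_compat; lra). lra. }
assert (Hs : 0 < rho*th/2 <= 1) by (split; nra).
set (sg := Rpower (rho*th/2) (Rabs (q-p))).
assert (Hsg : 0 < sg <= 1) by (split; [apply Rpower_gt0|apply Rpower_le1; auto; apply Rabs_pos]).
assert (HlP : 0 < Rpower lam P <= 1) by (split; [apply Rpower_gt0|apply Rpower_le1; auto; lra]).
assert (H2P : 1 <= Rpower 2 P). { rewrite <- (Rpower_O 2) by lra. apply Rle_Rpower; lra. }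
assert (Rpower lam P * sg <= 1) by nra.
assert (HK : 0 <= Rpower 2 P * (1 - Rpower lam P * sg)) by (apply Rmult_le_pos; lra).
pose proof (pw_ge0 t (q-2)). pose proof (pw_ge0 y q).
assert (0 <= pw t (q - 2) * pw y q) by nra.
destruct (Rle_dec x th).
- assert (pw t (p-2) <= 1) by (apply pw_le1; lra).
  assert (pw x p <= th*th) by (apply pw_small; lra).
  pose proof (pw_ge0 t (p-2)). pose proof (pw_ge0 x p). 
  assert (pw t (p-2) * pw x p <= th*th) by nra. nra.
- assert (Hly : lam * x <= y). { unfold lam.
    assert (eta <= eta/th * x). { unfold Rdiv. rewrite Rmult_assoc.
      assert (/th * x >= 1). { apply Rle_ge. apply Rmult_le_reg_l with th; try lra.
        rewrite <- Rmult_assoc, Rinv_r by lra. lra. } 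
      assert (0 < eta) by lra. nra. }
    unfold Rabs in Hxy; destruct Rcase_abs; lra. }
  assert (Hxp : 0 < x) by lra. assert (Htp : 0 < t) by lra.
  rewrite !pw_pos_eq by nra.
  assert (Hyq : Rpower (lam * x) q <= Rpower y q) by (apply Rle_Rpower_l; nra).
  rewrite <- Rpower_mult_distr in Hyq by lra.
  assert (Rpower lam P <= Rpower lam q) by (apply Rpower_exp_dec; lra).
  assert (Heq : Rpower t (q-2) * Rpower x q = Rpower t (p-2) * Rpower x p * Rpower (t*x) (q-p)).
  { rewrite <- Rpower_mult_distr by auto.
    replace (q-2) with ((p-2)+(q-p)) by ring. replace q with (p+(q-p)) at 2 by ring.
    rewrite !Rpower_plus. ring. }
  assert (Hsg2 : sg <= Rpower (t*x) (q-p)).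
  { unfold sg. destruct (Rle_dec 0 (q-p)).
    - rewrite Rabs_pos_eq by auto. apply Rle_Rpower_l; auto. split; try lra. nra.
    - rewrite Rabs_left by lra.
      assert (E: Rpower (t*x) (q-p) = Rpower (/(t*x)) (p-q)).
      { replace (q-p) with (-(p-q)) by ring. apply Rpower_neg_inv; nra. }
      rewrite E. replace (-(q-p)) with (p-q) by ring.
      apply Rle_Rpower_l; [lra|split;[lra|]].
      apply Rle_trans with (/2). nra. apply Rinv_le_contravar; nra. }
  set (F := Rpower t (p-2) * Rpower x p).
  assert (HF : 0 <= F <= Rpower 2 P).
  { unfold F. pose proof (Rpower_gt0 t (p-2)). pose proof (Rpower_gt0 x p). split. nra.
    assert (Rpower t (p-2) <= 1) by (apply Rpower_le1; lra).
    assert (Rpower x p <= Rpower 2 p) by (apply Rle_Rpower_l; lra).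
    assert (Rpower 2 p <= Rpower 2 P) by (apply Rle_Rpower; lra). nra. }
  pose proof (Rpower_gt0 t (q-2)). pose proof (Rpower_gt0 (t*x) (q-p)).
  pose proof (Rpower_gt0 lam q). pose proof (Rpower_gt0 x q).
  assert (Rpower t (q-2) * (Rpower lam q * Rpower x q) <= Rpower t (q-2) * Rpower y q).
  { apply Rmult_le_compat_l; lra. }
  assert (Rpower t (q-2) * (Rpower lam q * Rpower x q) = Rpower lam q * (F * Rpower (t*x) (q-p))).
  { rewrite <- Rmult_assoc, (Rmult_comm (Rpower t (q-2))), Rmult_assoc, Heq. unfold F; ring. }
  assert (F * (Rpower lam P * sg) <= Rpower lam q * (F * Rpower (t*x) (q-p))).
  { rewrite (Rmult_comm F), Rmult_assoc, (Rmult_comm F). apply Rmult_le_compat; try nra. }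
  nra.
Qed.

Lemma RInt_sub (f g : R -> R) a b : ex_RInt f a b -> ex_RInt g a b -> RInt (fun t => f t - g t) a b = RInt f a b - RInt g a b.
Proof. intros. exact (RInt_minus (V:=R_CompleteNormedModule) f g a b H H0). Qed.
Lemma ex_sub (f g : R -> R) a b : ex_RInt f a b -> ex_RInt g a b -> ex_RInt (fun t => f t - g t) a b.
Proof. intros. exact (ex_RInt_minus (V:=R_CompleteNormedModule) f g a b H H0). Qed.
Lemma RInt_swapR (f : R -> R) a b : ex_RInt f a b -> RInt f b a = - RInt f a b.
Proof. intros. rewrite <- (opp_RInt_swap (V:=R_CompleteNormedModule) f a b H). reflexivity. Qed.
Lemma RInt_pt0 (f : R -> R) a : RInt f a a = 0.
Proof. exact (RInt_point (V:=R_CompleteNormedModule) a f). Qed.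
Lemma RInt_chas (f : R -> R) a b c : ex_RInt f a b -> ex_RInt f b c -> RInt f a b + RInt f b c = RInt f a c.
Proof. intros. exact (RInt_Chasles (V:=R_CompleteNormedModule) f a b c H H0). Qed.

Definition gT (M c : R) (dv : R -> R) t := box (-M) M (c * dv (box 0 1 t)).
Definition wT M c dv r := RInt (gT M c dv) 1 r.

Lemma gT_cont v dv M c t : admissible v dv -> continuous (gT M c dv) t.
Proof.
intro Ha. unfold gT. apply continuous_comp with (g := box (-M) M); [|apply box_cont].
apply (cont_mult (fun _ => c) (fun t => dv (box 0 1 t))). apply continuous_const.
apply continuous_comp with (g := dv). apply box_cont.
apply adm_dv_cont with v; auto. apply box_range; lra.
Qed.

Lemma gT_ex v dv M c a b : admissible v dv -> ex_RInt (gT M c dv) a b.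
Proof. intro. apply (ex_RInt_continuous (V:=R_CompleteNormedModule)). intros; apply gT_cont with v; auto. Qed.

Lemma wT_derive v dv M c r : admissible v dv -> is_derive (wT M c dv) r (gT M c dv r).
Proof.
intro Ha. apply (is_derive_RInt (V:=R_CompleteNormedModule) (gT M c dv) (wT M c dv) 1 r).
exists (mkposreal 1 Rlt_0_1). intros b _. unfold wT. apply (RInt_correct (V:=R_CompleteNormedModule)).
apply gT_ex with v; auto. apply gT_cont with v; auto.
Qed.

Lemma wT_cont v dv M c r : admissible v dv -> continuous (wT M c dv) r.
Proof. intro Ha. apply cont_of_pt. apply derivable_continuous_pt. exists (gT M c dv r).
apply is_derive_Reals. apply wT_derive with v; auto. Qed.

Lemma wT_adm v dv M c : admissible v dv -> 0 <= M ->
  ~ (forall r, 0 <= r <= 1 -> wT M c dv r = 0) -> admissible (wT M c dv) (gT M c dv).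
Proof.
intros Ha HM Hnz. pose proof Ha as [_ [_ [H0 _]]]. split; [|split; [|split; [|split]]].
- intros; apply is_derive_Reals; apply wT_derive with v; auto.
- intros; apply pt_of_cont; apply gT_cont with v; auto.
- unfold gT. rewrite (box_in 0 1 0) by lra. rewrite H0, Rmult_0_r. apply box_in; lra.
- unfold wT. apply RInt_pt0.
- auto.
Qed.

Lemma cdv_cont v dv c p t : admissible v dv -> 0 <= t <= 1 -> 2 <= p ->
  continuous (fun t => pw (Rabs (c * dv t)) p) t.
Proof. intros. apply pw_abs_cont. lra. apply (cont_mult (fun _ => c) dv). apply continuous_const.
apply adm_dv_cont with v; auto. Qed.

Lemma cdv_ex v dv c p a b : admissible v dv -> 0 <= a <= b -> b <= 1 -> 2 <= p ->
  ex_RInt (fun t => pw (Rabs (c * dv t)) p) a b.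
Proof. intros. apply exI; try lra. intros; apply cdv_cont with v; auto; lra. Qed.

Lemma E1 v dv M c p r : admissible v dv -> 0 <= r <= 1 -> 2 <= p -> 0 < M ->
  Rabs (c * v r - wT M c dv r) <= Rpower M (1-p) * RInt (fun t => pw (Rabs (c * dv t)) p) 0 1.
Proof.
intros Ha Hr Hp HM.
assert (exd : ex_RInt dv r 1) by (apply adm_dv_ex with v; auto; lra).
assert (exg : ex_RInt (gT M c dv) r 1) by (apply gT_ex with v; auto).
assert (Heq : c * v r - wT M c dv r = RInt (fun t => gT M c dv t - c * dv t) r 1).
{ rewrite (adm_ftc v dv r Ha Hr). unfold wT. rewrite (RInt_swapR (gT M c dv) r 1) by auto.
  rewrite RInt_sub, RInt_mulc; auto. ring. apply ex_mulc; auto. }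
rewrite Heq.
assert (exh : ex_RInt (fun t => gT M c dv t - c * dv t) r 1) by (apply ex_sub; auto; apply ex_mulc; auto).
eapply Rle_trans. apply abs_RInt_le; auto. lra.
rewrite <- RInt_mulc by (apply cdv_ex with v; auto; lra).
assert (ex1 : ex_RInt (fun t => Rpower M (1-p) * pw (Rabs (c * dv t)) p) r 1).
{ apply ex_mulc; apply cdv_ex with v; auto; lra. }
assert (ex2 : ex_RInt (fun t => Rabs (gT M c dv t - c * dv t)) r 1).
{ apply (ex_RInt_norm (fun t => gT M c dv t - c * dv t)); auto. }
apply Rle_trans with (RInt (fun t => Rpower M (1-p) * pw (Rabs (c * dv t)) p) r 1).
apply RInt_le; auto. lra.
intros t Ht. unfold gT. rewrite (box_in 0 1 t) by lra.
rewrite <- Rabs_Ropp. replace (- (box (- M) M (c * dv t) - c * dv t)) with (c * dv t - box (- M) M (c * dv t)) by ring.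
apply trunc_err; lra.
apply int_sub; auto. apply ex_mulc; apply cdv_ex with v; auto; lra.
intros t Ht. pose proof (Rpower_gt0 M (1-p)). pose proof (pw_ge0 (Rabs (c * dv t)) p). nra.
Qed.

Lemma E2 v dv c p r : admissible v dv -> 0 <= r <= 1 -> 2 <= p ->
  Rabs (c * v r) <= 1 + RInt (fun t => pw (Rabs (c * dv t)) p) 0 1.
Proof.
intros Ha Hr Hp.
replace (1 + RInt (fun t => pw (Rabs (c * dv t)) p) 0 1) with (RInt (fun t => 1 + 1 * pw (Rabs (c * dv t)) p) 0 1).
assert (Hc : forall z, 0 <= z <= 1 -> continuous (fun t => 1 + 1 * pw (Rabs (c * dv t)) p) z).
{ intros z Hz.
apply (continuous_plus (V:=R_NormedModule) (fun _ => 1) (fun t => 1 * pw (Rabs (c * dv t)) p)). apply continuous_const.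
apply (cont_mult (fun _ => 1)). apply continuous_const. apply cdv_cont with v; auto. }
apply (adm_bound v dv c (fun t => 1 + 1 * pw (Rabs (c * dv t)) p) r); auto.
apply exI; auto; lra.
intros t Ht. pose proof (young 1 (Rabs (c * dv t)) p). 
replace (Rpower 1 (1-p)) with 1 in H. apply H; try lra. apply Rabs_pos.
unfold Rpower; rewrite ln_1, Rmult_0_r, exp_0; reflexivity.
rewrite RInt_affine by (apply cdv_ex with v; auto; lra). lra.
Qed.

Lemma e_nonneg th eta rho P s : 0 < eta < th -> th <= 1 -> 0 < rho <= 1 -> 0 <= P -> 0 <= s ->
  0 <= th*th + Rpower 2 P * (1 - Rpower (1 - eta/th) P * Rpower (rho*th/2) s).
Proof.
intros He Ht Hr HP Hs.
assert (Hlam : 0 < 1 - eta/th <= 1). { split.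
  assert (eta/th < 1). { apply Rmult_lt_reg_r with th; try lra. unfold Rdiv; rewrite Rmult_assoc, Rinv_l; lra. } lra.
  assert (0 < eta/th) by (apply Rdiv_lt_0_compat; lra). lra. }
assert (0 < rho*th/2 <= 1) by (split; nra).
assert (0 < Rpower (1 - eta/th) P <= 1) by (split; [apply Rpower_gt0|apply Rpower_le1; auto]).
assert (0 < Rpower (rho*th/2) s <= 1) by (split; [apply Rpower_gt0|apply Rpower_le1; auto]).
assert (1 <= Rpower 2 P). { rewrite <- (Rpower_O 2) by lra. apply Rle_Rpower; lra. }
assert (Rpower (1 - eta/th) P * Rpower (rho*th/2) s <= 1) by nra.
assert (0 <= Rpower 2 P * (1 - Rpower (1 - eta / th) P * Rpower (rho * th / 2) s)) by (apply Rmult_le_pos; lra).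
nra.
Qed.

Lemma Nbound v dv c M th p q : admissible v dv -> 2 <= p -> 2 <= q -> 0 < th <= 1 -> 1 <= M ->
  RInt (fun t => pw (Rabs (gT M c dv t)) q) 0 1 <=
  th*th + Rpower (M/th) (Rabs (q-p)) * RInt (fun t => pw (Rabs (c * dv t)) p) 0 1.
Proof.
intros Ha Hp Hq Ht HM.
apply Rle_trans with (RInt (fun t => th*th + Rpower (M/th) (Rabs (q-p)) * pw (Rabs (c * dv t)) p) 0 1).
2:{ rewrite RInt_affine by (apply cdv_ex with v; auto; lra). lra. }
apply RInt_le. lra.
apply exI; try lra. intros; apply pw_abs_cont; try lra. apply gT_cont with v; auto.
apply ex_add. apply ex_RInt_const. apply ex_mulc. apply cdv_ex with v; auto; lra.
intros t Ht'. unfold gT. rewrite (box_in 0 1 t) by lra. apply num_pt; lra.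
Qed.

Lemma Fc_cont v dv c p t : admissible v dv -> 2 <= p -> 0 <= t <= 1 ->
  continuous (fun t => pw t (p-2) * pw (Rabs (c * v t)) p) t.
Proof.
intros Ha Hp Ht. apply cont_mult. apply pw_cont; lra. apply pw_abs_cont; try lra.
apply (cont_mult (fun _ => c) v). apply continuous_const. apply adm_v_cont with dv; auto.
Qed.

Lemma Fw_cont v dv M c q t : admissible v dv -> 2 <= q ->
  continuous (fun t => pw t (q-2) * pw (Rabs (wT M c dv t)) q) t.
Proof.
intros Ha Hq. apply cont_mult. apply pw_cont; lra. apply pw_abs_cont; try lra.
apply wT_cont with v; auto.
Qed.

Lemma Dbound v dv c M th rho P p q : admissible v dv -> 2 <= p <= P -> 2 <= q <= P ->
  0 < th <= 1 -> 1 <= M -> 0 < rho <= 1 ->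
  RInt (fun t => pw (Rabs (c * dv t)) p) 0 1 <= 1 -> Rpower M (1-p) < th ->
  RInt (fun t => pw t (p-2) * pw (Rabs (c * v t)) p) 0 1 - rho * Rpower 2 P
   - (th*th + Rpower 2 P * (1 - Rpower (1 - Rpower M (1-p)/th) P * Rpower (rho*th/2) (Rabs (q-p))))
  <= RInt (fun t => pw t (q-2) * pw (Rabs (wT M c dv t)) q) 0 1.
Proof.
intros Ha Hp Hq Ht HM Hr HI Hth.
set (Ic := RInt (fun t => pw (Rabs (c * dv t)) p) 0 1) in *.
set (eta := Rpower M (1-p)) in *.
set (e := th*th + Rpower 2 P * (1 - Rpower (1 - eta/th) P * Rpower (rho*th/2) (Rabs (q-p)))).
set (Fc := fun t => pw t (p-2) * pw (Rabs (c * v t)) p).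
set (Fw := fun t => pw t (q-2) * pw (Rabs (wT M c dv t)) q).
change (RInt Fc 0 1 - rho * Rpower 2 P - e <= RInt Fw 0 1).
assert (Heta : 0 < eta) by apply Rpower_gt0.
assert (He : 0 <= e) by (apply e_nonneg; try lra; apply Rabs_pos).
assert (HIc : 0 <= Ic). { apply RInt_ge_0; try lra. apply cdv_ex with v; auto; lra. intros; apply pw_ge0. }
assert (exFc : forall a b, 0 <= a <= b -> b <= 1 -> ex_RInt Fc a b).
{ intros; apply exI; try lra. intros; apply Fc_cont with dv; auto; lra. }
assert (exFw : forall a b, 0 <= a <= b -> b <= 1 -> ex_RInt Fw a b).
{ intros; apply exI; try lra. intros; apply Fw_cont with v; auto; lra. }
assert (H2P : 1 <= Rpower 2 P). { rewrite <- (Rpower_O 2) by lra. apply Rle_Rpower; lra. }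
assert (H1 : RInt Fc 0 rho <= rho * Rpower 2 P).
{ apply Rle_trans with (RInt (fun _ => Rpower 2 P) 0 rho).
  apply RInt_le; try lra. apply exFc; lra. apply ex_RInt_const.
  intros t Htt. unfold Fc.
  assert (pw t (p-2) <= 1) by (apply pw_le1; lra).
  assert (Rabs (c * v t) <= 2). { pose proof (E2 v dv c p t Ha ltac:(lra) ltac:(lra)). fold Ic in H0. lra. }
  assert (pw (Rabs (c * v t)) p <= Rpower 2 P).
  { eapply Rle_trans. apply pw_le_base with (y := 2); try lra. split; auto; apply Rabs_pos.
    rewrite pw_pos_eq by lra. apply Rle_Rpower; lra. }
  pose proof (pw_ge0 t (p-2)); pose proof (pw_ge0 (Rabs (c * v t)) p). nra.
  rewrite RInt_cst. lra. }
assert (H2 : RInt (fun t => Fc t - e) rho 1 <= RInt Fw rho 1).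
{ apply RInt_le; try lra. apply ex_sub. apply exFc; lra. apply ex_RInt_const. apply exFw; lra.
  intros t Htt. unfold Fc, Fw.
  assert (Hx : Rabs (c * v t) <= 2). { pose proof (E2 v dv c p t Ha ltac:(lra) ltac:(lra)). fold Ic in H. lra. }
  assert (Hxy : Rabs (Rabs (c * v t) - Rabs (wT M c dv t)) <= eta).
  { eapply Rle_trans. apply Rabs_triang_inv2. 
    pose proof (E1 v dv M c p t Ha ltac:(lra) ltac:(lra) ltac:(lra)). fold Ic eta in H.
    assert (eta * Ic <= eta) by nra. lra. }
  apply (den_pt th eta rho P p q t); try lra. split; auto; apply Rabs_pos. apply Rabs_pos. }
rewrite RInt_sub, RInt_cst in H2. 2: apply exFc; lra. 2: apply ex_RInt_const.
assert (RInt Fw 0 rho >= 0). { apply Rle_ge, RInt_ge_0; try lra. apply exFw; lra.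
  intros; unfold Fw; pose proof (pw_ge0 x (q-2)); pose proof (pw_ge0 (Rabs (wT M c dv x)) q); nra. }
rewrite <- (RInt_chas Fc 0 rho 1) by (apply exFc; lra).
rewrite <- (RInt_chas Fw 0 rho 1) by (apply exFw; lra).
nra.
Qed.

Lemma dv_cont' v dv p t : admissible v dv -> 2 <= p -> 0 <= t <= 1 ->
  continuous (fun t => pw (Rabs (dv t)) p) t.
Proof. intros. apply pw_abs_cont. lra. apply adm_dv_cont with v; auto. Qed.

Lemma vbound v dv p th r : admissible v dv -> 2 <= p -> 0 < th -> 0 <= r <= 1 ->
  Rabs (v r) <= th + Rpower th (1-p) * RInt (fun t => pw (Rabs (dv t)) p) 0 1.
Proof.
intros Ha Hp Ht Hr.
assert (exA : ex_RInt (fun t => pw (Rabs (dv t)) p) 0 1).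
{ apply exI; try lra. intros; apply dv_cont' with v; auto. }
rewrite <- (Rmult_1_l (v r)).
replace (th + Rpower th (1 - p) * RInt (fun t : R => pw (Rabs (dv t)) p) 0 1)
  with (RInt (fun t => th + Rpower th (1-p) * pw (Rabs (dv t)) p) 0 1)
  by (rewrite RInt_affine; auto; lra).
apply (adm_bound v dv 1); auto.
apply ex_add. apply ex_RInt_const. apply ex_mulc; auto.
intros t Htt. apply (continuous_plus (V:=R_NormedModule) (fun _ => th) (fun t => Rpower th (1-p) * pw (Rabs (dv t)) p)).
apply continuous_const. apply (cont_mult (fun _ => _)). apply continuous_const. apply dv_cont' with v; auto.
intros t Htt. rewrite Rmult_1_l. apply young; try lra. apply Rabs_pos.
Qed.

Lemma A_pos v dv p : admissible v dv -> 2 <= p -> 0 < RInt (fun t => pw (Rabs (dv t)) p) 0 1.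
Proof.
intros Ha Hp.
assert (exA : ex_RInt (fun t => pw (Rabs (dv t)) p) 0 1).
{ apply exI; try lra. intros; apply dv_cont' with v; auto. }
assert (H0 : 0 <= RInt (fun t => pw (Rabs (dv t)) p) 0 1).
{ apply RInt_ge_0; auto; try lra. intros; apply pw_ge0. }
destruct H0 as [H0|H0]; auto. exfalso.
pose proof Ha as [_ [_ [_ [_ Hnz]]]]. apply Hnz. intros r Hr.
apply Rabs_eq_0. apply Rle_antisym; [|apply Rabs_pos].
apply Rnot_lt_le. intro Hlt.
pose proof (vbound v dv p (Rabs (v r) / 2) r Ha Hp ltac:(lra) Hr).
rewrite <- H0, Rmult_0_r in H. lra.
Qed.

Lemma pos_int (f : R -> R) t0 : (forall t, 0 <= t <= 1 -> continuous f t) ->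
  (forall t, 0 <= t <= 1 -> 0 <= f t) -> 0 < t0 < 1 -> 0 < f t0 -> 0 < RInt f 0 1.
Proof.
intros Hc Hn Ht0 Hf0.
pose proof (pt_of_cont f t0 (Hc t0 ltac:(lra))) as Hpt.
destruct (Hpt (f t0 / 2) ltac:(lra)) as [al [Hal Hal2]].
set (a := Rmax (t0 - al/2) (t0/2)). set (b := Rmin (t0 + al/2) ((1+t0)/2)).
assert (Ha : t0/2 <= a /\ t0 - al/2 <= a /\ a < t0).
{ unfold a, Rmax; destruct Rle_dec; lra. }
assert (Hb : b <= (1+t0)/2 /\ b <= t0 + al/2 /\ t0 < b).
{ unfold b, Rmin; destruct Rle_dec; lra. }
assert (Hex : forall x y, 0 <= x <= y -> y <= 1 -> ex_RInt f x y).
{ intros; apply exI; try lra. intros; apply Hc; lra. }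
assert (Hab : 0 < RInt f a b).
{ apply RInt_gt_0. lra.
  intros x Hx. destruct (Req_dec x t0) as [->|Hne]; auto.
  assert (R_dist (f x) (f t0) < f t0 / 2).
  { apply Hal2. split. split. exact I. auto. change (Rabs (x - t0) < al). apply Rabs_def1; lra. }
  change (Rabs (f x - f t0) < f t0 / 2) in H. apply Rabs_def2 in H. lra.
  intros; apply Hc; lra. }
assert (0 <= RInt f 0 a) by (apply RInt_ge_0; try lra; [apply Hex; lra|intros; apply Hn; lra]).
assert (0 <= RInt f b 1) by (apply RInt_ge_0; try lra; [apply Hex; lra|intros; apply Hn; lra]).
rewrite <- (RInt_chas f 0 a 1) by (apply Hex; lra).
rewrite <- (RInt_chas f a b 1) by (apply Hex; lra).
lra.
Qed.

Lemma B_pos v dv p : admissible v dv -> 2 <= p ->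
  0 < RInt (fun t => pw t (p-2) * pw (Rabs (v t)) p) 0 1.
Proof.
intros Ha Hp.
assert (exists t0, 0 < t0 < 1 /\ v t0 <> 0) as [t0 [Ht0 Hv0]].
{ pose proof Ha as [_ [_ [_ [H1 Hnz]]]].
  apply NNPP. intro Hno. apply Hnz. intros r Hr.
  destruct (Req_dec (v r) 0) as [E|E]; auto. exfalso.
  destruct (Req_dec r 1) as [->|Hr1]. auto.
  destruct (Req_dec r 0) as [->|Hr0].
  - pose proof (pt_of_cont v 0 (adm_v_cont v dv 0 Ha ltac:(lra))) as Hpt.
    destruct (Hpt (Rabs (v 0) / 2)) as [al [Hal Hal2]].
    { pose proof (Rabs_pos_lt _ E); lra. }
    set (t := Rmin (al/2) (1/2)).
    assert (0 < t <= al/2 /\ t <= 1/2) by (unfold t, Rmin; destruct Rle_dec; lra).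
    apply Hno. exists t. split. lra. intro Ht.
    assert (R_dist (v t) (v 0) < Rabs (v 0) / 2).
    { apply Hal2. split. split. exact I. lra. change (Rabs (t - 0) < al). rewrite Rminus_0_r, Rabs_pos_eq; lra. }
    change (Rabs (v t - v 0) < Rabs (v 0) / 2) in H0. rewrite Ht, Rminus_0_l, Rabs_Ropp in H0. pose proof (Rabs_pos (v 0)). lra.
  - apply Hno. exists r. split; auto. lra. }
apply (pos_int _ t0); auto.
- intros; apply (Fc_cont v dv 1 p t) in Ha; auto. revert Ha. apply continuous_ext. intro; rewrite Rmult_1_l; auto.
- intros; pose proof (pw_ge0 t (p-2)); pose proof (pw_ge0 (Rabs (v t)) p); nra.
- pose proof (pw_gt0 t0 (p-2) ltac:(lra)). pose proof (pw_gt0 (Rabs (v t0)) p (Rabs_pos_lt _ Hv0)). nra.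
Qed.

Lemma ln_le_xm1 y : 0 < y -> ln y <= y - 1.
Proof. intro Hy. pose proof (exp_ineq1_le (y-1)).
rewrite <- (ln_exp (y-1)). destruct (Req_dec y (exp (y-1))) as [E|E].
rewrite <- E; lra. left; apply ln_increasing; auto. lra. Qed.

Lemma Rpower_lower lam P : 1/2 <= lam <= 1 -> 0 <= P -> 1 - 2*P*(1-lam) <= Rpower lam P.
Proof.
intros Hl HP. unfold Rpower. eapply Rle_trans; [|apply exp_ineq1_le].
assert (ln lam >= -2*(1-lam)).
{ replace (ln lam) with (- ln (/lam)) by (rewrite ln_Rinv; [ring|lra]).
  pose proof (ln_le_xm1 (/lam) ltac:(apply Rinv_0_lt_compat; lra)).
  assert (/lam - 1 <= 2*(1-lam)).
  { apply Rmult_le_reg_l with lam. lra. rewrite Rmult_minus_distr_l, Rinv_r by lra. nra. }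
  lra. }
nra.
Qed.

Lemma Rpower_lower2 b s : 0 < b -> 1 + s * ln b <= Rpower b s.
Proof. intros; unfold Rpower; apply exp_ineq1_le. Qed.

Lemma exp_upper y : 0 <= y <= 1/2 -> exp y <= 1 + 2*y.
Proof.
intro Hy. pose proof (exp_ineq1_le (-y)).
assert (exp y * exp (-y) = 1) by (rewrite <- exp_plus; replace (y + -y) with 0 by ring; apply exp_0).
pose proof (exp_pos y). nra.
Qed.

Lemma Rpower_M M p : 1 <= M -> 2 <= p -> Rpower M (1-p) <= / M.
Proof.
intros. rewrite <- (Rpower_1 M) at 2 by lra. rewrite <- Rpower_Ropp.
apply Rle_Rpower; lra.
Qed.

Lemma norm_c A p : 0 < A -> 2 <= p -> pw (Rpower A (-/p)) p = / A.
Proof.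
intros. rewrite pw_pos_eq by apply Rpower_gt0. rewrite Rpower_mult.
replace (-/p*p) with (-(1)) by (field; lra). rewrite Rpower_Ropp, Rpower_1; auto.
Qed.

Lemma pw_cmul c y p : 0 < c -> pw (Rabs (c * y)) p = pw c p * pw (Rabs y) p.
Proof. intros. rewrite Rabs_mult, Rabs_pos_eq by lra. apply pw_mul; [lra|apply Rabs_pos]. Qed.

Lemma Rmin_le_l a b : Rmin a b <= a. Proof. unfold Rmin; destruct Rle_dec; lra. Qed.
Lemma Rmin_le_r a b : Rmin a b <= b. Proof. unfold Rmin; destruct Rle_dec; lra. Qed.
Lemma Rmin_pos' a b : 0 < a -> 0 < b -> 0 < Rmin a b. Proof. unfold Rmin; destruct Rle_dec; lra. Qed.

Lemma transfer P Qm g : 2 <= P -> 0 < Qm -> 0 < g ->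
  exists d, 0 < d /\ forall p q x, 2 <= p <= P -> 2 <= q <= P -> Rabs (q - p) < d ->
    Rayleigh p x -> x <= Qm -> exists y, Rayleigh q y /\ y <= (p-1)/(q-1) * x * (1+g).
Proof.
intros HP HQ Hg.
set (k := Rmin (1/2) (g/4)).
assert (Hk : 0 < k /\ k <= 1/2 /\ k <= g/4).
{ split. apply Rmin_pos'; lra. split; [apply Rmin_le_l|apply Rmin_le_r]. }
set (b0 := / ((P-1) * Qm)).
assert (Hb0 : 0 < b0) by (apply Rinv_0_lt_compat; nra).
set (tau := Rmin 1 (k * b0)).
assert (Htau : 0 < tau /\ tau <= 1 /\ tau <= k * b0).
{ split. apply Rmin_pos'; nra. split; [apply Rmin_le_l|apply Rmin_le_r]. }
set (T2 := Rpower 2 P).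
assert (HT2 : 1 <= T2). { unfold T2. rewrite <- (Rpower_O 2) by lra. apply Rle_Rpower; lra. }
set (th := Rmin 1 (Rmin (k/2) (tau/4))).
assert (Hth : 0 < th /\ th <= 1 /\ th <= k/2 /\ th <= tau/4).
{ split. apply Rmin_pos'; [lra|apply Rmin_pos'; lra].
  split. apply Rmin_le_l. pose proof (Rmin_le_r 1 (Rmin (k/2) (tau/4))).
  pose proof (Rmin_le_l (k/2) (tau/4)). pose proof (Rmin_le_r (k/2) (tau/4)). fold th in H. lra. }
set (a := tau / (4 * T2)).
assert (Ha : 0 < a /\ a * T2 = tau / 4 /\ a <= 1/4).
{ unfold a. split. apply Rdiv_lt_0_compat; lra. split. field; lra.
  apply Rmult_le_reg_r with (4*T2). lra. unfold Rdiv. rewrite Rmult_assoc, Rinv_l by lra. nra. }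
set (rho := Rmin 1 a).
assert (Hrho : 0 < rho /\ rho <= 1 /\ rho <= a).
{ split. apply Rmin_pos'; lra. split; [apply Rmin_le_l|apply Rmin_le_r]. }
set (M := 1 + 2 * P / (a * th) + 2 / th).
assert (HM : 1 <= M /\ 2 * P / (a * th) <= M /\ 2 / th <= M).
{ assert (0 <= 2 * P / (a * th)) by (apply Rle_mult_inv_pos; nra).
  assert (0 <= 2 / th) by (apply Rle_mult_inv_pos; lra). unfold M. lra. }
set (L := - ln (rho * th / 2)).
assert (HL : 0 <= L).
{ unfold L. assert (ln (rho*th/2) < 0). { rewrite <- ln_1. apply ln_increasing; nra. } lra. }
set (LM := ln (M / th)).
assert (HLM : 0 <= LM).
{ unfold LM. rewrite <- ln_1. apply ln_le. lra. 
  apply Rmult_le_reg_r with th. lra. unfold Rdiv. rewrite Rmult_assoc, Rinv_l by lra. nra. }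
exists (Rmin (a / (1 + L)) (k / (4 * (1 + LM)))).
split. apply Rmin_pos'; apply Rdiv_lt_0_compat; lra.
intros p q x Hp Hq Hs Hx Hxq.
set (s := Rabs (q-p)) in *.
assert (Hs0 : 0 <= s) by apply Rabs_pos.
assert (HsL : s * L <= a).
{ assert (s < a / (1+L)) by (pose proof (Rmin_le_l (a / (1 + L)) (k / (4 * (1 + LM)))); lra).
  apply Rmult_lt_compat_r with (r := 1+L) in H; [|lra].
  unfold Rdiv in H; rewrite Rmult_assoc, Rinv_l in H by lra. nra. }
assert (HsLM : s * LM <= k/4).
{ assert (s < k / (4*(1+LM))) by (pose proof (Rmin_le_r (a / (1 + L)) (k / (4 * (1 + LM)))); lra).
  apply Rmult_lt_compat_r with (r := 4*(1+LM)) in H; [|lra].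
  unfold Rdiv in H; rewrite Rmult_assoc, Rinv_l in H by lra. nra. }
destruct Hx as [v [dv [A [B [Hadm [HA [HB Hxe]]]]]]].
apply Rint_RInt in HA as [exA HA]. apply Rint_RInt in HB as [exB HB].
pose proof (A_pos v dv p Hadm ltac:(lra)) as HA0. rewrite HA in HA0.
pose proof (B_pos v dv p Hadm ltac:(lra)) as HB0. rewrite HB in HB0.
set (c := Rpower A (-/p)).
assert (Hc : 0 < c) by apply Rpower_gt0.
assert (Hcp : pw c p = / A) by (apply norm_c; lra).
assert (HIc : RInt (fun t => pw (Rabs (c * dv t)) p) 0 1 = 1).
{ rewrite (RInt_ext _ (fun t => /A * pw (Rabs (dv t)) p)).
  rewrite RInt_mulc by auto. rewrite HA. apply Rinv_l; lra.
  intros; rewrite pw_cmul, Hcp; auto. }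
assert (HBc : RInt (fun t => pw t (p-2) * pw (Rabs (c * v t)) p) 0 1 = / ((p-1) * x)).
{ rewrite (RInt_ext _ (fun t => /A * (pw t (p-2) * pw (Rabs (v t)) p))).
  rewrite RInt_mulc by auto. rewrite HB, Hxe. change (/ A * B = / ((p - 1) * (A / ((p - 1) * B)))). field. split; lra.
  intros; rewrite pw_cmul, Hcp; auto.
  cut (forall a b c : R, a * (b * c) = b * (a * c)). intro Hc'; apply Hc'. intros; ring. }
assert (Hx0 : 0 < x). { rewrite Hxe. apply Rdiv_lt_0_compat; nra. }
set (Bc := / ((p-1)*x)) in *.
assert (HBc0 : b0 <= Bc). { unfold b0, Bc. apply Rinv_le_contravar. nra. apply Rmult_le_compat; lra. }
set (eta := Rpower M (1-p)).
assert (Heta : 0 < eta /\ eta <= th/2 /\ 2 * P * (eta/th) <= a).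
{ assert (eta <= /M) by (apply Rpower_M; lra).
  assert (0 < /M) by (apply Rinv_0_lt_compat; lra).
  split. apply Rpower_gt0.
  assert (/M <= th/2). { apply Rmult_le_reg_l with M. lra. rewrite Rinv_r by lra.
     assert (2/th*(th/2) = 1) by (field; lra). nra. }
  split. lra.
  assert (/M <= a * th / (2*P)). { apply Rmult_le_reg_l with M. lra. rewrite Rinv_r by lra.
     assert (2*P/(a*th)*(a*th/(2*P)) = 1) by (field; split; lra). 
     assert (0 < a*th/(2*P)) by (apply Rdiv_lt_0_compat; nra). nra. }
  assert (eta/th <= a/(2*P)). { unfold Rdiv. apply Rmult_le_reg_r with th. lra.
     rewrite Rmult_assoc, Rinv_l by lra. 
     assert (a * th / (2 * P) = a * / (2*P) * th) by (field; lra). lra. }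
  assert (2*P*(a/(2*P)) = a) by (field; lra).
  assert (2*P*(eta/th) <= 2*P*(a/(2*P))) by (apply Rmult_le_compat_l; lra). lra. }
pose proof (Nbound v dv c M th p q Hadm ltac:(lra) ltac:(lra) ltac:(lra) ltac:(lra)) as HN.
rewrite HIc, Rmult_1_r in HN. fold s in HN.
assert (HMs : Rpower (M/th) s <= 1 + k/2).
{ unfold Rpower. rewrite Rmult_comm. fold LM. eapply Rle_trans. apply exp_upper. nra. lra. }
set (Nw := RInt (fun t => pw (Rabs (gT M c dv t)) q) 0 1) in *.
assert (HNw : Nw <= 1 + k).
{ assert (th*th <= th) by nra. lra. }
pose proof (Dbound v dv c M th rho P p q Hadm Hp Hq ltac:(lra) ltac:(lra) ltac:(lra) (Req_le _ _ HIc) ltac:(change (eta < th); lra)) as HD.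
rewrite HBc in HD. fold eta s in HD.
set (Dw := RInt (fun t => pw t (q-2) * pw (Rabs (wT M c dv t)) q) 0 1) in *.
assert (Hlam : 1 - a <= Rpower (1 - eta/th) P).
{ eapply Rle_trans; [|apply Rpower_lower]. 
  replace (1 - 2 * P * (1 - (1 - eta / th))) with (1 - 2*P*(eta/th)) by ring. lra.
  split. assert (eta/th <= 1/2). { unfold Rdiv. apply Rmult_le_reg_r with th. lra. rewrite Rmult_assoc, Rinv_l by lra. lra. } lra.
  assert (0 <= eta/th) by (apply Rle_mult_inv_pos; lra). lra. lra. }
assert (Hsig : 1 - a <= Rpower (rho*th/2) s).
{ eapply Rle_trans; [|apply Rpower_lower2]. fold L. 2: nra.
  replace (s * ln (rho*th/2)) with (- (s * L)) by (unfold L; ring). lra. }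
assert (Hprod : 1 - 2*a <= Rpower (1 - eta/th) P * Rpower (rho*th/2) s).
{ assert ((1-a)*(1-a) <= Rpower (1 - eta/th) P * Rpower (rho*th/2) s) by (apply Rmult_le_compat; lra). nra. }
assert (HDw : Bc - tau <= Dw).
{ assert (rho * T2 <= tau/4) by nra.
  assert (T2 * (1 - Rpower (1 - eta/th) P * Rpower (rho*th/2) s) <= T2 * (2*a)) by (apply Rmult_le_compat_l; lra).
  assert (th*th <= tau/4) by nra. fold T2 in HD. lra. }
assert (HDw2 : (1-k) * Bc <= Dw) by nra.
assert (HDpos : 0 < Dw) by nra.
exists (Nw / ((q-1) * Dw)). split.
- exists (wT M c dv), (gT M c dv), Nw, Dw. split; [|split; [|split]].
  + apply wT_adm with v; [auto|lra|].
    intro Hz. assert (Dw = 0).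
    { unfold Dw. rewrite (RInt_ext _ (fun _ => 0)). rewrite RInt_cst. apply Rmult_0_l.
      intros t Ht. rewrite Rmin_left, Rmax_right in Ht by lra. rewrite Hz by lra.
      rewrite Rabs_R0, (pw_nonpos 0 q) by lra. apply Rmult_0_r. }
    lra.
  + apply RInt_Rint. apply exI; try lra. intros; apply pw_abs_cont; try lra. apply gT_cont with v; auto.
  + apply RInt_Rint. apply exI; try lra. intros; apply Fw_cont with v; auto; lra.
  + reflexivity.
- assert (HBx : Bc * ((p-1)*x) = 1) by (unfold Bc; field; nra).
  apply Rmult_le_reg_r with ((q-1)*Dw). nra.
  unfold Rdiv. rewrite Rmult_assoc, Rinv_l, Rmult_1_r by nra.
  assert ((p-1) * / (q-1) * x * (1+g) * ((q-1)*Dw) = (p-1)*x*(1+g)*Dw) by (field; lra).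
  rewrite H.
  assert ((p-1)*x*(1+g)*((1-k)*Bc) = (1+g)*(1-k)).
  { transitivity ((1+g)*(1-k)*(Bc*((p-1)*x))). ring. rewrite HBx; ring. }
  assert ((p-1)*x*(1+g)*((1-k)*Bc) <= (p-1)*x*(1+g)*Dw) by (apply Rmult_le_compat_l; nra).
  assert (1 + k <= (1+g)*(1-k)) by nra.
  lra.
Qed.

Lemma Ray_norm p x : 2 <= p -> Rayleigh p x -> 0 < x /\ exists v dv c, admissible v dv /\
  RInt (fun t => pw (Rabs (c * dv t)) p) 0 1 = 1 /\
  RInt (fun t => pw t (p-2) * pw (Rabs (c * v t)) p) 0 1 = / ((p-1) * x).
Proof.
intros Hp [v [dv [A [B [Hadm [HA [HB Hxe]]]]]]].
apply Rint_RInt in HA as [exA HA]. apply Rint_RInt in HB as [exB HB].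
pose proof (A_pos v dv p Hadm ltac:(lra)) as HA0. rewrite HA in HA0.
pose proof (B_pos v dv p Hadm ltac:(lra)) as HB0. rewrite HB in HB0.
assert (Hx0 : 0 < x). { rewrite Hxe. apply Rdiv_lt_0_compat; nra. }
split; auto.
set (c := Rpower A (-/p)).
assert (Hc : 0 < c) by apply Rpower_gt0.
assert (Hcp : pw c p = / A) by (apply norm_c; lra).
exists v, dv, c. split; auto. split.
{ rewrite (RInt_ext _ (fun t => /A * pw (Rabs (dv t)) p)).
  rewrite RInt_mulc by auto. rewrite HA. apply Rinv_l; lra.
  intros; rewrite pw_cmul, Hcp; auto. }
{ rewrite (RInt_ext _ (fun t => /A * (pw t (p-2) * pw (Rabs (v t)) p))).
  rewrite RInt_mulc by auto. rewrite HB, Hxe. change (/ A * B = / ((p - 1) * (A / ((p - 1) * B)))). field. split; lra.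
  intros; rewrite pw_cmul, Hcp; auto.
  cut (forall a b c : R, a * (b * c) = b * (a * c)). intro Hc'; apply Hc'. intros; ring. }
Qed.

Lemma Bc_le v dv c p : admissible v dv -> 2 <= p -> RInt (fun t => pw (Rabs (c * dv t)) p) 0 1 <= 1 ->
  RInt (fun t => pw t (p-2) * pw (Rabs (c * v t)) p) 0 1 <= Rpower 2 p.
Proof.
intros Ha Hp HI.
apply Rle_trans with (RInt (fun _ => Rpower 2 p) 0 1).
apply RInt_le; try lra. apply exI; try lra. intros; apply Fc_cont with dv; auto. apply ex_RInt_const.
intros t Htt.
assert (pw t (p-2) <= 1) by (apply pw_le1; lra).
assert (Rabs (c * v t) <= 2). { pose proof (E2 v dv c p t Ha ltac:(lra) ltac:(lra)). lra. }
assert (pw (Rabs (c * v t)) p <= Rpower 2 p).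
{ eapply Rle_trans. apply pw_le_base with (y := 2); try lra. split; auto; apply Rabs_pos.
  rewrite pw_pos_eq by lra. lra. }
pose proof (pw_ge0 t (p-2)); pose proof (pw_ge0 (Rabs (c * v t)) p). nra.
rewrite RInt_cst. lra.
Qed.

Lemma Ray_lower p x : 2 <= p -> Rayleigh p x -> / ((p-1) * Rpower 2 p) <= x.
Proof.
intros Hp H. destruct (Ray_norm p x Hp H) as [Hx [v [dv [c [Ha [HI HB]]]]]].
pose proof (Bc_le v dv c p Ha Hp ltac:(lra)). rewrite HB in H0.
pose proof (Rpower_gt0 2 p).
apply Rmult_le_reg_l with ((p-1) * Rpower 2 p). nra.
rewrite Rinv_r by nra.
apply Rmult_le_compat_r with (r := (p-1)*x) in H0; [|nra].
rewrite Rinv_l in H0 by nra. nra.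
Qed.

Lemma Ray_of_adm v dv p : admissible v dv -> 2 <= p ->
  Rayleigh p (RInt (fun t => pw (Rabs (dv t)) p) 0 1 / ((p-1) * RInt (fun t => pw t (p-2) * pw (Rabs (v t)) p) 0 1)).
Proof.
intros Ha Hp. exists v, dv, (RInt (fun t => pw (Rabs (dv t)) p) 0 1), (RInt (fun t => pw t (p-2) * pw (Rabs (v t)) p) 0 1).
split; auto. split; [|split; auto].
apply RInt_Rint. apply exI; try lra. intros; apply dv_cont' with v; auto.
apply RInt_Rint. apply exI; try lra. intros t Ht. pose proof (Fc_cont v dv 1 p t Ha Hp Ht).
revert H. apply continuous_ext. intro; rewrite Rmult_1_l; auto.
Qed.

Lemma Ray_nonempty p : 2 <= p -> exists x, Rayleigh p x.
Proof.
intro Hp. eexists. apply (Ray_of_adm (fun r => 1 - r*r) (fun r => -2*r)); auto.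
split; [|split; [|split; [|split]]].
- intros r _. apply is_derive_Reals. auto_derive; auto. ring.
- intros r _. apply pt_of_cont. apply (cont_mult (fun _ => -2) (fun r => r)). apply continuous_const. apply continuous_id.
- ring.
- ring.
- intro H. specialize (H 0 ltac:(lra)). lra.
Qed.

Lemma eta_glb p : 2 <= p -> is_glb (Rayleigh p) (eta1 p).
Proof.
intro Hp. unfold eta1. apply epsilon_spec.
set (E := fun y => Rayleigh p (-y)).
assert (HE : bound E). { exists 0. intros y Hy. unfold E in Hy.
  destruct (Ray_norm p (-y) Hp Hy) as [H _]. lra. }
assert (HE2 : exists y, E y). { destruct (Ray_nonempty p Hp) as [x Hx]. exists (-x). unfold E. rewrite Ropp_involutive; auto. }
destruct (completeness E HE HE2) as [m [Hm1 Hm2]].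
exists (-m). split.
- intros x Hx. assert (-x <= m). { apply Hm1. unfold E. rewrite Ropp_involutive; auto. } lra.
- intros b Hb. assert (m <= -b). { apply Hm2. intros y Hy. unfold E in Hy. specialize (Hb _ Hy). lra. } lra.
Qed.

Lemma eta_le p x : 2 <= p -> Rayleigh p x -> eta1 p <= x.
Proof. intros Hp H. apply (proj1 (eta_glb p Hp)); auto. Qed.

Lemma eta_approx p e : 2 <= p -> 0 < e -> exists x, Rayleigh p x /\ x < eta1 p + e.
Proof.
intros Hp He. apply NNPP. intro Hn.
assert (is_lower_bound (Rayleigh p) (eta1 p + e)).
{ intros x Hx. apply Rnot_lt_le. intro. apply Hn. exists x; auto. }
pose proof (proj2 (eta_glb p Hp) _ H). lra.
Qed.

Lemma eta_pos p : 2 <= p -> / ((p-1) * Rpower 2 p) <= eta1 p.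
Proof. intro Hp. apply (proj2 (eta_glb p Hp)). intros x Hx. apply Ray_lower; auto. Qed.

Lemma lim_comp f g D l x0 : limit1_in f D l x0 -> continuity_pt g l ->
  limit1_in (fun x => g (f x)) D (g l) x0.
Proof.
intros Hf Hg eps Heps. destruct (Hg eps Heps) as [eta [Heta H1]].
destruct (Hf eta Heta) as [al [Hal H2]]. exists al; split; auto.
intros x Hx. destruct (Req_dec (f x) l) as [E|E].
- rewrite E. change (Rabs (g l - g l) < eps). rewrite Rminus_diag, Rabs_R0; lra.
- apply H1. split. split. exact I. auto. apply H2; auto.
Qed.

Lemma lim_cont h D x0 : continuity_pt h x0 -> limit1_in h D (h x0) x0.
Proof.
intros Hh eps Heps. destruct (Hh eps Heps) as [al [Hal H]]. exists al; split; auto.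
intros x [Dx Hx]. destruct (Req_dec x x0) as [->|E].
- change (Rabs (h x0 - h x0) < eps). rewrite Rminus_diag, Rabs_R0; lra.
- apply H. split; auto. split. exact I. auto.
Qed.

Lemma eta_transfer P Qm g : 2 <= P -> 0 < Qm -> 0 < g ->
  exists d, 0 < d /\ forall p q, 2 <= p <= P -> 2 <= q <= P -> Rabs (q - p) < d ->
   eta1 p < Qm -> eta1 q <= (p-1)/(q-1) * eta1 p * (1+g).
Proof.
intros HP HQ Hg. destruct (transfer P Qm g HP HQ Hg) as [d [Hd H]].
exists d; split; auto. intros p q Hp Hq Hpq Hlt.
set (K := (p-1)/(q-1) * (1+g)).
assert (HK : 0 < K) by (unfold K; apply Rmult_lt_0_compat; [apply Rdiv_lt_0_compat|]; lra).
apply Rnot_lt_le. intro Hc.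
set (e := Rmin ((Qm - eta1 p)/2) ((eta1 q - K * eta1 p)/(2*K))).
assert (He : 0 < e /\ e <= (Qm - eta1 p)/2 /\ e <= (eta1 q - K * eta1 p)/(2*K)).
{ split. apply Rmin_pos'. lra. apply Rdiv_lt_0_compat; [|lra]. 
  replace ((p - 1) / (q - 1) * eta1 p * (1 + g)) with (K * eta1 p) in Hc by (unfold K; ring). lra.
  split; [apply Rmin_le_l|apply Rmin_le_r]. }
destruct (eta_approx p e ltac:(lra) ltac:(lra)) as [x [Hx Hxe]].
destruct (H p q x Hp Hq Hpq Hx ltac:(lra)) as [y [Hy Hyle]].
pose proof (eta_le q y ltac:(lra) Hy).
assert (y <= K * x) by (unfold K in *; lra).
assert (K * x < K * (eta1 p + e)) by (apply Rmult_lt_compat_l; auto).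
assert (K * e <= (eta1 q - K * eta1 p)/2).
{ destruct He as [_ [_ He]]. apply Rmult_le_compat_l with (r := K) in He; [|lra].
  replace (K * ((eta1 q - K * eta1 p) / (2 * K))) with ((eta1 q - K * eta1 p)/2) in He by (field; lra). lra. }
assert (K * (eta1 p + e) = K * eta1 p + K * e) by ring.
replace ((p - 1) / (q - 1) * eta1 p * (1 + g)) with (K * eta1 p) in Hc by (unfold K; ring).
lra.
Qed.

Lemma eta_cont p0 : 2 <= p0 -> limit1_in eta1 (fun p => 2 <= p) (eta1 p0) p0.
Proof.
intros Hp0. set (b := eta1 p0).
assert (Hb : 0 < b).
{ eapply Rlt_le_trans; [|apply eta_pos; auto]. apply Rinv_0_lt_compat.
  pose proof (Rpower_gt0 2 p0). nra. }
set (P := p0 + 1).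
intros eps Heps.
destruct (eta_transfer P (b+1) 1 ltac:(unfold P; lra) ltac:(lra) ltac:(lra)) as [d1 [Hd1 T1]].
set (Qb := 2*(p0-1)*b + 1).
set (g := Rmin 1 (eps / (12*b+1))).
assert (Hg : 0 < g /\ g <= 1 /\ g <= eps / (12*b+1)).
{ split. apply Rmin_pos'. lra. apply Rdiv_lt_0_compat; lra. split; [apply Rmin_le_l|apply Rmin_le_r]. }
destruct (eta_transfer P (b+1) g ltac:(unfold P; lra) ltac:(lra) ltac:(lra)) as [dU [HdU TU]].
destruct (eta_transfer P Qb g ltac:(unfold P; lra) ltac:(unfold Qb; nra) ltac:(lra)) as [dL [HdL TL]].
exists (Rmin (Rmin d1 dU) (Rmin dL (Rmin 1 g))).
split. repeat apply Rmin_pos'; lra.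
intros q [Hq Hqd]. change (Rabs (q - p0) < Rmin (Rmin d1 dU) (Rmin dL (Rmin 1 g))) in Hqd.
pose proof (Rmin_le_l (Rmin d1 dU) (Rmin dL (Rmin 1 g))).
pose proof (Rmin_le_r (Rmin d1 dU) (Rmin dL (Rmin 1 g))).
pose proof (Rmin_le_l d1 dU). pose proof (Rmin_le_r d1 dU).
pose proof (Rmin_le_l dL (Rmin 1 g)). pose proof (Rmin_le_r dL (Rmin 1 g)).
pose proof (Rmin_le_l 1 g). pose proof (Rmin_le_r 1 g).
assert (Hqp : Rabs (q - p0) < g /\ Rabs (q-p0) < 1 /\ Rabs (q - p0) < d1 /\ Rabs (q-p0) < dU /\ Rabs (p0 - q) < dL).
{ rewrite (Rabs_minus_sym p0 q). repeat split; lra. }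
assert (Hqr : - g < q - p0 < g) by (destruct Hqp as [Hqp _]; apply Rabs_def2 in Hqp; lra).
assert (HqP : 2 <= q <= P) by (unfold P; lra).
assert (Hp0P : 2 <= p0 <= P) by (unfold P; lra).
pose proof (T1 p0 q Hp0P HqP ltac:(lra) ltac:(fold b; lra)) as B1. fold b in B1.
assert (Hr1 : (p0-1)/(q-1) <= 1 + g).
{ apply Rmult_le_reg_r with (q-1). lra. unfold Rdiv. rewrite Rmult_assoc, Rinv_l by lra. nra. }
assert (Hr2 : (q-1)/(p0-1) <= 1 + g).
{ apply Rmult_le_reg_r with (p0-1). lra. unfold Rdiv. rewrite Rmult_assoc, Rinv_l by lra. nra. }
assert (Hr1' : 0 < (p0-1)/(q-1)) by (apply Rdiv_lt_0_compat; lra).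
assert (Hr2' : 0 < (q-1)/(p0-1)) by (apply Rdiv_lt_0_compat; lra).
assert (Hr1'' : (p0-1)/(q-1) <= p0 - 1).
{ apply Rmult_le_reg_r with (q-1). lra. unfold Rdiv. rewrite Rmult_assoc, Rinv_l by lra. nra. }
assert (HQ : eta1 q < Qb).
{ unfold Qb. assert ((p0 - 1) / (q - 1) * b * (1 + 1) <= (p0-1) * b * 2) by nra. lra. }
pose proof (TU p0 q Hp0P HqP ltac:(lra) ltac:(fold b; lra)) as BU. fold b in BU.
pose proof (TL q p0 HqP Hp0P ltac:(lra) HQ) as BL. fold b in BL.
assert (Heq0 : 0 <= eta1 q).
{ eapply Rle_trans; [|apply eta_pos; lra]. left. apply Rinv_0_lt_compat.
  pose proof (Rpower_gt0 2 q). nra. }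
set (u := (1+g)*(1+g)).
assert (Hu : u - 1 <= 3 * g /\ u <= 4 /\ 1 <= u) by (unfold u; split; nra).
assert (BU' : eta1 q <= b * u).
{ assert ((p0 - 1) / (q - 1) * b * (1 + g) <= (1+g) * b * (1+g)).
  { apply Rmult_le_compat_r. lra. apply Rmult_le_compat_r; lra. }
  unfold u. lra. }
assert (BL' : b <= eta1 q * u).
{ assert ((q - 1) / (p0 - 1) * eta1 q * (1 + g) <= (1+g) * eta1 q * (1+g)).
  { apply Rmult_le_compat_r. lra. apply Rmult_le_compat_r; lra. }
  unfold u. lra. }
assert (12 * b * g < eps).
{ assert (g * (12*b+1) <= eps).
  { destruct Hg as [_ [_ Hg]]. apply Rmult_le_compat_r with (r := 12*b+1) in Hg; [|lra].
    unfold Rdiv in Hg. rewrite Rmult_assoc, Rinv_l in Hg by lra. lra. }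
  nra. }
change (Rabs (eta1 q - b) < eps). apply Rabs_def1.
- assert (b * u - b <= b * (3*g)) by nra.
  assert (b * (3*g) <= 12*b*g) by nra. lra.
- assert (b - eta1 q <= eta1 q * (u - 1)) by nra.
  assert (eta1 q * (u - 1) <= eta1 q * (3*g)) by (apply Rmult_le_compat_l; lra).
  assert (eta1 q * (3*g) <= (b*u) * (3*g)) by (apply Rmult_le_compat_r; lra).
  assert ((b*u) * (3*g) <= (b*4) * (3*g)) by (apply Rmult_le_compat_r; [lra|apply Rmult_le_compat_l; lra]).
  assert (b * 4 * (3*g) = 12*b*g) by ring. lra.
Qed.

Theorem lemma2p7 :
  forall p0 : R, 2 <= p0 -> limit1_in mu1 (fun p => 2 <= p) (mu1 p0) p0.
Proof.
intros p0 Hp0.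
assert (Hb : 0 < eta1 p0).
{ eapply Rlt_le_trans; [|apply eta_pos; auto]. apply Rinv_0_lt_compat.
  pose proof (Rpower_gt0 2 p0). nra. }
unfold mu1, Rpower.
apply (lim_comp (fun p => 1/(p-1) * ln (eta1 p)) exp).
- apply limit_mul.
  + apply (lim_cont (fun p => 1/(p-1))). apply derivable_continuous_pt. eexists. apply is_derive_Reals.
    auto_derive. lra. reflexivity.
  + apply (lim_comp eta1 ln). apply eta_cont; auto. apply derivable_continuous_pt.
    exists (/ eta1 p0). apply derivable_pt_lim_ln; auto.
- apply derivable_continuous_pt. apply derivable_pt_exp.
Qed.
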